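(* Let $A$ be a real $m\times n$ matrix, $\mathbf b\in\mathbb R^m$, $\mathbf c\in\mathbb R^n$ (row vector), such that the linear program $\max\mathbf c\mathbf x$ s.t. $A\mathbf x\le\mathbf b$, $\mathbf x\ge0$ has unique optimal primal and dual solutions $\mathbf x^*$, $\mathbf y^*$. Then for every primal feasible $\mathbf x$, \[ \|\mathbf x_{\bar U}\|\le\frac{\mathbf c(\mathbf x^*-\mathbf x)}{\beta_D(A,\mathbf b,\mathbf c)}. \]
   Context: The dual is $\min\mathbf y\mathbf b$ s.t. $\mathbf yA\ge\mathbf c$, $\mathbf y\ge0$. $U=\{i:x^*_i>0\}$, $\bar U$ its complement in $\{1,\dots,n\}$, $\mathbf x_{\bar U}$ the restriction of $\mathbf x$ to coordinates in $\bar U$, and $\beta_D(A,\mathbf b,\mathbf c)=\min_{i\in\bar U}(\mathbf y^*A_{:,i}-c_i)$, with $A_{:,i}$ the $i$th column of $A$. $\|\cdot\|$ is the Euclidean norm. *)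

(* Defs.v *)
From mathcomp Require Import all_boot all_order all_algebra.
From mathcomp Require Import reals.
Set Implicit Arguments. Unset Strict Implicit. Unset Printing Implicit Defensive.
Import Order.TTheory GRing.Theory Num.Theory.
Local Open Scope ring_scope.

Section LP.
Variables (R : realType) (m n : nat).
Variables (A : 'M[R]_(m, n)) (b : 'cV[R]_m) (c : 'rV[R]_n).

Definition primal_feasible (x : 'cV[R]_n) : Prop :=
  (forall i, (A *m x) i 0 <= b i 0) /\ (forall j, 0 <= x j 0).
Definition primal_value (x : 'cV[R]_n) : R := (c *m x) 0 0.
Definition primal_optimal (x : 'cV[R]_n) : Prop :=
  primal_feasible x /\ forall x', primal_feasible x' -> primal_value x' <= primal_value x.

Definition dual_feasible (y : 'rV[R]_m) : Prop :=
  (forall j, c 0 j <= (y *m A) 0 j) /\ (forall i, 0 <= y 0 i).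
Definition dual_value (y : 'rV[R]_m) : R := (y *m b) 0 0.
Definition dual_optimal (y : 'rV[R]_m) : Prop :=
  dual_feasible y /\ forall y', dual_feasible y' -> dual_value y <= dual_value y'.

Definition unique_primal_optimum (xs : 'cV[R]_n) : Prop :=
  primal_optimal xs /\ forall x, primal_optimal x -> x = xs.
Definition unique_dual_optimum (ys : 'rV[R]_m) : Prop :=
  dual_optimal ys /\ forall y, dual_optimal y -> y = ys.

(* Ubar = { i : x*_i = 0 } (complement of the support U of x* ) *)
Definition Ubar (xs : 'cV[R]_n) : pred 'I_n := fun i => ~~ (0 < xs i 0).

Definition norm_restr (xs x : 'cV[R]_n) : R :=
  Num.sqrt (\sum_(i < n | Ubar xs i) x i 0 ^+ 2).

(* beta_D = min_{i in Ubar} (y* A_{:,i} - c_i); convention 0 if Ubar is empty *)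
Definition betaD (xs : 'cV[R]_n) (ys : 'rV[R]_m) : R :=
  match [seq (ys *m col i A) 0 0 - c 0 i | i <- enum (Ubar xs)] with
  | [::] => 0
  | h :: t => foldr Num.min h t
  end.
End LP.

(* Main.v *)
Require Import Defs.
From mathcomp Require Import all_boot all_order all_algebra.
From mathcomp Require Import reals ring lra.
Set Implicit Arguments. Unset Strict Implicit. Unset Printing Implicit Defensive.
Import Order.TTheory GRing.Theory Num.Theory.
Local Open Scope ring_scope.

Section FM.
Variable R : realFieldType.

Lemma exists_between (I : finType) (PL PU : pred I) (L U : I -> R) :
  (forall i k, PL i -> PU k -> L i <= U k) ->
  exists t, (forall i, PL i -> L i <= t) /\ (forall k, PU k -> t <= U k).
Proof.
move=> H.
case: (pickP PL) => [i0 Hi0 | none].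
  case: (arg_maxP L Hi0) => i Pi Hmax.
  exists (L i); split => [j Pj|k Pk]; first exact: Hmax.
  exact: H.
case: (pickP PU) => [k0 Hk0 | noneU].
  case: (arg_minP U Hk0) => k Pk Hmin.
  exists (U k); split => [j Pj|k' Pk']; first by rewrite none in Pj.
  exact: Hmin.
exists 0; split => [j|j]; by [rewrite none | rewrite noneU].
Qed.

Lemma FM q : forall (I : finType) (a : I -> 'I_q -> R) (d : I -> R),
  (forall u : I -> R, (forall i, 0 <= u i) ->
     (forall j, \sum_i u i * a i j = 0) -> 0 <= \sum_i u i * d i) ->
  exists x : 'I_q -> R, forall i, \sum_j a i j * x j <= d i.
Proof.
elim: q => [|q IH] I a d H.
  exists (fun _ => 0) => i; rewrite big_ord0.
  have := H (fun k => (k == i)%:R).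
  rewrite (bigD1 i) //= eqxx mul1r big1 ?addr0; last first.
    by move=> k /negbTE ->; rewrite mul0r.
  apply => [k|[]//]; exact: ler0n.
pose l i := a i ord_max.
pose lam (p : I * I) : R := if (0 < l p.1) && (l p.2 < 0) then - l p.2
  else if (p.1 == p.2) && (l p.1 == 0) then 1 else 0.
pose mu (p : I * I) : R := if (0 < l p.1) && (l p.2 < 0) then l p.1 else 0.
have lam0 p : 0 <= lam p.
  rewrite /lam; case: ifP => [/andP[_ h]|_]; first by rewrite oppr_ge0 ltW.
  by case: ifP.
have mu0 p : 0 <= mu p.
  rewrite /mu; case: ifP => [/andP[h _]|_] //; exact: ltW.
have lmu p : lam p * l p.1 + mu p * l p.2 = 0.
  rewrite /lam /mu; case: ifP => _; first by ring.
  by case: ifP => [/andP[_ /eqP ->]|_]; ring.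
pose w (j : 'I_q) : 'I_q.+1 := widen_ord (leqnSn q) j.
pose a' (p : I * I) (j : 'I_q) := lam p * a p.1 (w j) + mu p * a p.2 (w j).
pose d' (p : I * I) := lam p * d p.1 + mu p * d p.2.
have [x' Hx'] : exists x' : 'I_q -> R, forall p, \sum_j a' p j * x' j <= d' p.
  apply: IH => v v0 hv.
  pose u i := \sum_k v (i, k) * lam (i, k) + \sum_k v (k, i) * mu (k, i).
  have key (f : I -> R) : \sum_i u i * f i =
      \sum_p v p * (lam p * f p.1 + mu p * f p.2).
    rewrite /u.
    under eq_bigr do rewrite mulrDl !mulr_suml.
    rewrite big_split /=.
    under [X in _ = X]eq_bigr do rewrite mulrDr.
    rewrite big_split /=.
    congr (_ + _).
      rewrite pair_big /=; apply: eq_bigr => -[i k] _ /=; ring.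
    rewrite exchange_big pair_big /=; apply: eq_bigr => -[i k] _ /=; ring.
  have := H u.
  rewrite key.
  apply.
  - move=> i; rewrite /u; apply: addr_ge0; apply: sumr_ge0 => k _;
      exact: mulr_ge0.
  - move=> j; rewrite key.
    case: (unliftP ord_max j) => [j'|] ->.
      have Ew : lift ord_max j' = w j' by apply: val_inj; exact: lift_max.
      rewrite Ew; exact: (hv j').
    by rewrite big1 // => p _; have := lmu p; rewrite /l => ->; rewrite mulr0.
pose r i := d i - \sum_j a i (w j) * x' j.
have Hlk i k : l i < 0 -> 0 < l k -> r i / l i <= r k / l k.
  move=> li lk.
  have := Hx' (k, i).
  rewrite /d' /a' /lam /mu /= lk li /=.
  under eq_bigr do rewrite mulrDl -!mulrA.
  rewrite big_split /= -!mulr_sumr => h.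
  have h2 : l i * r k <= l k * r i.
    rewrite /r; lra.
  rewrite ler_pdivlMr // mulrAC ler_ndivrMr //; lra.
have [t [Ht1 Ht2]] := exists_between (fun i k => Hlk i k).
exists (fun j => oapp x' t (insub (val j))) => i.
rewrite big_ord_recr /=.
have -> : insub q = None :> option 'I_q by rewrite insubN // ltnn.
rewrite /=.
have E : \sum_(j < q) a i (widen_ord (leqnSn q) j) *
     oapp x' t (insub (val (widen_ord (leqnSn q) j))) = d i - r i.
  rewrite /r opprB addrC subrK; apply: eq_bigr => j _.
  by rewrite /= valK.
rewrite E -/(l i).
case: (ltrgt0P (l i)) => hl.
- have := Ht2 i hl; rewrite ler_pdivlMr // => h; lra.
- have := Ht1 i hl; rewrite ler_ndivrMr // => h; lra.
- have := Hx' (i, i).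
  rewrite /d' /a' /lam /mu /= hl ltxx !eqxx /= !mul0r !addr0 !mul1r.
  under eq_bigr do rewrite mul0r addr0 mul1r.
  rewrite /r => h; lra.
Qed.
End FM.

Lemma sum_delta (R : realFieldType) (I : finType) (k : I) (f : I -> R) :
  \sum_i (i == k)%:R * f i = f k.
Proof.
rewrite (bigD1 k) //= eqxx mul1r big1 ?addr0 // => i /negbTE ->; exact: mul0r.
Qed.

Lemma sum_delta_r (R : realFieldType) (I : finType) (k : I) (f : I -> R) :
  \sum_i f i * (i == k)%:R = f k.
Proof.
rewrite (bigD1 k) //= eqxx mulr1 big1 ?addr0 // => i /negbTE ->; exact: mulr0.
Qed.

Lemma sum_delta_l (R : realFieldType) (I : finType) (k : I) (f : I -> R) :
  \sum_i (k == i)%:R * f i = f k.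
Proof.
rewrite (bigD1 k) //= eqxx mul1r big1 ?addr0 // => i; rewrite eq_sym => /negbTE ->; exact: mul0r.
Qed.

Lemma weak_duality (R : realType) m n (A : 'M[R]_(m,n)) b c x y :
  primal_feasible A b x -> dual_feasible A c y -> primal_value c x <= dual_value b y.
Proof.
move=> [Ax x0] [yA y0]; rewrite /primal_value /dual_value.
have E : ((y *m A) *m x) 0 0 = (y *m (A *m x)) 0 0 by rewrite mulmxA.
apply: (@le_trans _ _ (((y *m A) *m x) 0 0)).
  rewrite !mxE; apply: ler_sum => j _; apply: ler_wpM2r => //; exact: yA.
rewrite E !mxE; apply: ler_sum => k _; apply: ler_wpM2l => //.
Qed.

Lemma dual_le_primal (R : realType) m n (A : 'M[R]_(m,n)) b c xs ys :
  primal_optimal A b c xs -> dual_optimal A b c ys ->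
  dual_value b ys <= primal_value c xs.
Proof.
move=> [[xsA xs0] xsO] [ysF ysO].
set v := primal_value c xs.
pose a (i : ('I_n + 'I_m) + 'I_1) (k : 'I_m) : R :=
  match i with inl (inl j) => - A k j | inl (inr k') => - (k' == k)%:R
  | inr _ => b k 0 end.
pose d (i : ('I_n + 'I_m) + 'I_1) : R :=
  match i with inl (inl j) => - c 0 j | inl (inr _) => 0 | inr _ => v end.
have [y Hy] : exists y : 'I_m -> R, forall i, \sum_k a i k * y k <= d i.
  apply: FM => u u0 hu.
  rewrite !big_sumType big_ord1 /=.
  under [X in _ + X + _]eq_bigr do rewrite mulr0.
  rewrite big1_eq addr0.
  set t := u (inr ord0).
  have t0 : 0 <= t by exact: u0.
  pose x : 'cV[R]_n := \col_j u (inl (inl j)).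
  have hk k : \sum_j A k j * x j 0 <= t * b k 0.
    have := hu k; rewrite !big_sumType big_ord1 /=.
    under [X in _ + X + _ = _]eq_bigr do rewrite mulrN.
    rewrite sumrN sum_delta_r.
    have -> : \sum_j u (inl (inl j)) * - A k j = - \sum_j A k j * x j 0.
      rewrite -sumrN; apply: eq_bigr => j _; rewrite mxE; ring.
    have := u0 (inl (inr k)); rewrite /=; rewrite /t; lra.
  pose z : 'cV[R]_n := \col_j ((x j 0 + xs j 0) / (t + 1)).
  have t1 : 0 < t + 1 by lra.
  have zF : primal_feasible A b z.
    split=> [k|j]; last first.
      rewrite mxE; apply: divr_ge0; last lra.
      by apply: addr_ge0; rewrite ?mxE.
    rewrite mxE.
    have -> : \sum_j A k j * z j 0 =
        (\sum_j A k j * x j 0 + \sum_j A k j * xs j 0) / (t + 1).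
      rewrite -big_split mulr_suml; apply: eq_bigr => j _; rewrite mxE /=; ring.
    rewrite ler_pdivrMr //.
    have := xsA k; rewrite mxE.
    have := hk k; lra.
  have := xsO z zF.
  rewrite /primal_value -/v mxE.
  have -> : \sum_j c 0 j * z j 0 = (\sum_j c 0 j * x j 0 + v) / (t + 1).
    rewrite /v /primal_value mxE -big_split mulr_suml; apply: eq_bigr => j _; rewrite mxE /=; ring.
  rewrite ler_pdivrMr //.
  have -> : \sum_j u (inl (inl j)) * - c 0 j = - \sum_j c 0 j * x j 0.
    rewrite -sumrN; apply: eq_bigr => j _; rewrite mxE; ring.
  rewrite -/(primal_value c xs) -/v; nra.
pose yr : 'rV[R]_m := \row_k y k.
have yF : dual_feasible A c yr.
  split=> [j|k]; rewrite mxE.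
    have := Hy (inl (inl j)); rewrite /=.
    have -> : \sum_k - A k j * y k = - \sum_k yr 0 k * A k j.
      rewrite -sumrN; apply: eq_bigr => k _; rewrite mxE; ring.
    lra.
  have := Hy (inl (inr k)); rewrite /=.
  under eq_bigr do rewrite mulNr.
  rewrite sumrN sum_delta_l; lra.
apply: (le_trans (ysO yr yF)).
have := Hy (inr ord0); rewrite /= /dual_value mxE => h.
apply: le_trans h; rewrite le_eqVlt; apply/orP; left; apply/eqP.
by apply/eqP; rewrite eq_le; apply/andP; split; apply: ler_sum => k _; rewrite mxE mulrC.
Qed.

Lemma strict_comp (R : realType) m n (A : 'M[R]_(m,n)) b c xs ys j :
  unique_primal_optimum A b c xs -> unique_dual_optimum A b c ys ->
  Ubar xs j -> c 0 j < (ys *m A) 0 j.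
Proof.
move=> [[[xsA xs0] xsO] xsU] [[ysF ysO] ysU] hj.
have hd := dual_le_primal (conj (conj xsA xs0) xsO) (conj ysF ysO).
set v := primal_value c xs in hd *.
have xsj : xs j 0 = 0.
  move: hj; rewrite /Ubar -leNgt => h; apply/eqP; rewrite eq_le h; exact: xs0.
pose w (k : 'I_m) : 'I_m.+1 := widen_ord (leqnSn m) k.
pose ext (f : 'I_m -> R) (z : R) (k : 'I_m.+1) : R := oapp f z (insub (val k)).
have extW f z k : ext f z (w k) = f k by rewrite /ext /= valK.
have extM f z : ext f z ord_max = z by rewrite /ext insubN //= ltnn.
have sum_ext f z (F : 'I_m.+1 -> R) :
    \sum_k ext f z k * F k = \sum_k f k * F (w k) + z * F ord_max.
  rewrite big_ord_recr /= extM; congr (_ + _); apply: eq_bigr => k _.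
  by rewrite (extW f z k).
pose a (i : ('I_n + 'I_m) + ('I_1 + 'I_1)) (K : 'I_m.+1) : R :=
  match i with
  | inl (inl j') => ext (fun k => - A k j') (c 0 j') K
  | inl (inr k') => ext (fun k => - (k' == k)%:R) 0 K
  | inr (inl _) => ext (fun _ => 0) (-1) K
  | inr (inr _) => ext (fun k => b k 0) (- v) K end.
pose d (i : ('I_n + 'I_m) + ('I_1 + 'I_1)) : R :=
  match i with inl (inl j') => - (j' == j)%:R | _ => 0 end.
have [X HX] : exists X : 'I_m.+1 -> R, forall i, \sum_K a i K * X K <= d i.
  apply: FM => u u0 hu.
  rewrite !big_sumType !big_ord1 /=.
  under eq_bigr do rewrite mulrN.
  rewrite sumrN sum_delta_r.
  under eq_bigr do rewrite mulr0.
  rewrite big1_eq !mulr0 !addr0.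
  pose x : 'cV[R]_n := \col_j' u (inl (inl j')).
  set r := u (inr (inl ord0)).
  set t := u (inr (inr ord0)).
  have t0 : 0 <= t by exact: u0.
  have hk k : \sum_j' A k j' * x j' 0 <= t * b k 0.
    have := hu (w k); rewrite !big_sumType !big_ord1 /= !extW.
    under eq_bigr do rewrite extW.
    under [X in _ + X + _ = _]eq_bigr do rewrite extW mulrN.
    rewrite sumrN sum_delta_r mulr0 add0r.
    have -> : \sum_j' u (inl (inl j')) * - A k j' = - \sum_j' A k j' * x j' 0.
      rewrite -sumrN; apply: eq_bigr => j' _; rewrite mxE; ring.
    have := u0 (inl (inr k)); rewrite /= -/t; lra.
  have hc : t * v <= \sum_j' c 0 j' * x j' 0.
    have := hu ord_max; rewrite !big_sumType !big_ord1 /= !extM.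
    under eq_bigr do rewrite extM.
    under [X in _ + X + _ = _]eq_bigr do rewrite extM mulr0.
    rewrite big1_eq addr0.
    have -> : \sum_j' u (inl (inl j')) * c 0 j' = \sum_j' c 0 j' * x j' 0.
      apply: eq_bigr => j' _; rewrite mxE; ring.
    have := u0 (inr (inl ord0)); rewrite /= -/t -/r; lra.
  pose z : 'cV[R]_n := \col_j' ((x j' 0 + xs j' 0) / (t + 1)).
  have t1 : 0 < t + 1 by lra.
  have zF : primal_feasible A b z.
    split=> [k|j']; last first.
      rewrite mxE; apply: divr_ge0; last lra.
      by apply: addr_ge0; rewrite ?mxE.
    rewrite mxE.
    have -> : \sum_j' A k j' * z j' 0 =
        (\sum_j' A k j' * x j' 0 + \sum_j' A k j' * xs j' 0) / (t + 1).
      rewrite -big_split mulr_suml; apply: eq_bigr => j' _; rewrite mxE /=; ring.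
    rewrite ler_pdivrMr //.
    have := xsA k; rewrite mxE.
    have := hk k; lra.
  have zO : primal_optimal A b c z.
    split=> // x' x'F.
    apply: (le_trans (xsO x' x'F)); rewrite -/v /primal_value mxE.
    have -> : \sum_j' c 0 j' * z j' 0 = (\sum_j' c 0 j' * x j' 0 + v) / (t + 1).
      rewrite /v /primal_value mxE -big_split mulr_suml; apply: eq_bigr => j' _.
      rewrite mxE /=; ring.
    rewrite ler_pdivlMr //; nra.
  have := congr1 (fun M : 'cV[R]_n => M j 0) (xsU z zO).
  rewrite /= mxE xsj addr0 => /eqP; rewrite mulf_eq0 invr_eq0 mxE.
  case/orP => /eqP h; last lra.
  rewrite h; lra.
pose y : 'rV[R]_m := \row_k X (w k).
set t := X ord_max.
have Hj' j' : c 0 j' * t + (j' == j)%:R <= \sum_k X (w k) * A k j'.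
  have := HX (inl (inl j')); rewrite /= sum_ext.
  have -> : \sum_k - A k j' * X (w k) = - \sum_k X (w k) * A k j'.
    rewrite -sumrN; apply: eq_bigr => k _; ring.
  rewrite -/t; lra.
have Hk k : 0 <= X (w k).
  have := HX (inl (inr k)); rewrite /= sum_ext mul0r addr0.
  under eq_bigr do rewrite mulNr.
  rewrite sumrN sum_delta_l; lra.
have t0 : 0 <= t.
  have := HX (inr (inl ord0)); rewrite /= sum_ext.
  under eq_bigr do rewrite mul0r.
  rewrite big1_eq -/t; lra.
have Hb : \sum_k b k 0 * X (w k) <= v * t.
  have := HX (inr (inr ord0)); rewrite /= sum_ext -/t; lra.
have t1 : 0 < t + 1 by lra.
pose z : 'rV[R]_m := \row_k ((X (w k) + ys 0 k) / (t + 1)).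
have zA j' : (z *m A) 0 j' = (\sum_k X (w k) * A k j' + (ys *m A) 0 j') / (t + 1).
  rewrite !mxE -big_split mulr_suml; apply: eq_bigr => k _; rewrite mxE /=; ring.
have zF : dual_feasible A c z.
  split=> [j'|k].
    rewrite zA ler_pdivlMr //.
    have := Hj' j'; have := ysF.1 j'.
    have : 0 <= (j' == j)%:R :> R by exact: ler0n.
    lra.
  rewrite mxE; apply: divr_ge0; last lra.
  apply: addr_ge0; [exact: Hk | exact: ysF.2].
have zO : dual_optimal A b c z.
  split=> // y' y'F.
  apply: le_trans (weak_duality (conj xsA xs0) y'F); rewrite -/v.
  rewrite /dual_value !mxE.
  have -> : \sum_k z 0 k * b k 0 = (\sum_k b k 0 * X (w k) + (ys *m b) 0 0) / (t + 1).
    rewrite mxE -big_split mulr_suml; apply: eq_bigr => k _; rewrite mxE /=; ring.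
  rewrite ler_pdivrMr //.
  move: hd; rewrite /dual_value; nra.
have := congr1 (fun M : 'rV[R]_m => (M *m A) 0 j) (ysU z zO).
rewrite /= zA => E.
have := Hj' j; rewrite eqxx.
have : (ys *m A) 0 j * (t + 1) = \sum_k X (w k) * A k j + (ys *m A) 0 j.
  by rewrite -{1}E divfK // gt_eqF.
move=> H1 H2; rewrite ltNge; apply/negP => h.
have h' : 0 <= c 0 j - (ys *m A) 0 j by rewrite subr_ge0.
have := mulr_ge0 t0 h'.
move: H2; rewrite /= => H2.
nra.
Qed.

Lemma foldr_min_props (R : realType) (h : R) (s : seq R) :
  foldr Num.min h s \in h :: s /\ forall x, x \in h :: s -> foldr Num.min h s <= x.
Proof.
elim: s => [|y s [IH1 IH2]] /=.
  by split; [rewrite inE | move=> x; rewrite inE => /eqP ->].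
split.
  rewrite /Num.min; case: ifP => _; first by rewrite !inE eqxx orbT.
  move: IH1; rewrite !inE => /orP[->|->] //; by rewrite ?orbT.
move=> x; rewrite !inE => /or3P[/eqP->|/eqP->|xs].
- by rewrite ge_min IH2 ?orbT // inE eqxx.
- by rewrite ge_min lexx.
- by rewrite ge_min IH2 ?orbT // inE xs orbT.
Qed.

Lemma sqrt_sum_le (R : realType) (I : finType) (P : pred I) (f : I -> R) :
  (forall i, P i -> 0 <= f i) ->
  Num.sqrt (\sum_(i | P i) f i ^+ 2) <= \sum_(i | P i) f i.
Proof.
move=> f0.
have S0 : 0 <= \sum_(i | P i) f i by apply: sumr_ge0.
rewrite -(ger0_norm S0) -sqrtr_sqr ler_wsqrtr //.
pose K (a1 a2 : R) := a1 <= a2 ^+ 2 /\ 0 <= a2.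
suff : K (\sum_(i | P i) f i ^+ 2) (\sum_(i | P i) f i) by case.
apply: (big_rec2 K); first by rewrite /K expr0n /=; split.
move=> i a1 a2 Pi [h1 h2]; have := f0 i Pi; rewrite /K => fi.
split; last lra.
rewrite sqrrD; nra.
Qed.

Theorem mainTheorem14 (R : realType) (m n : nat)
  (A : 'M[R]_(m, n)) (b : 'cV[R]_m) (c : 'rV[R]_n)
  (xs : 'cV[R]_n) (ys : 'rV[R]_m) :
  unique_primal_optimum A b c xs ->
  unique_dual_optimum A b c ys ->
  forall x : 'cV[R]_n, primal_feasible A b x ->
  norm_restr xs x <= (primal_value c xs - primal_value c x) / betaD A c xs ys.
Proof.
move=> Hp Hd x xF.
have [[[xsA xs0] xsO] _] := Hp.
have [[ysF ysO] _] := Hd.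
have [xA x0] := xF.
have hdp := dual_le_primal (conj (conj xsA xs0) xsO) (conj ysF ysO).
pose D i := (ys *m col i A) 0 0 - c 0 i.
have hD i : D i = (ys *m A) 0 i - c 0 i.
  by rewrite /D !mxE; congr (_ - _); apply: eq_bigr => k _; rewrite mxE.
have D0 i : 0 <= D i by rewrite hD subr_ge0; exact: ysF.1.
have hmain : \sum_(i | Ubar xs i) D i * x i 0 <= primal_value c xs - primal_value c x.
  have h1 : (ys *m (A *m x)) 0 0 <= dual_value b ys.
    rewrite /dual_value !mxE; apply: ler_sum => k _; apply: ler_wpM2l.
      exact: ysF.2.
    by have := xA k; rewrite mxE.
  have h2 : (ys *m (A *m x)) 0 0 = \sum_i (ys *m A) 0 i * x i 0.
    by rewrite mulmxA mxE.
  have h3 : \sum_(i | Ubar xs i) D i * x i 0 <= \sum_i D i * x i 0.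
    rewrite [X in _ <= X](bigID (Ubar xs)) /= lerDl.
    by apply: sumr_ge0 => i _; apply: mulr_ge0.
  have h4 : \sum_i D i * x i 0 = \sum_i (ys *m A) 0 i * x i 0 - primal_value c x.
    rewrite /primal_value mxE -sumrB; apply: eq_bigr => i _; rewrite hD; ring.
  lra.
rewrite /betaD /norm_restr.
have -> : [seq (ys *m col i A) 0 0 - c 0 i | i <- enum (Ubar xs)] =
  map D (enum (Ubar xs)) by [].
case E: (enum (Ubar xs)) => [|h t] /=.
  rewrite invr0 mulr0 big_pred0 ?sqrtr0 // => i.
  by have := mem_enum (Ubar xs) i; rewrite E in_nil => /esym.
have [hin hle] := foldr_min_props (D h) (map D t).
have Dmem i : Ubar xs i -> D i \in D h :: map D t.
  by move=> Ui; rewrite -(map_cons D) -E map_f // mem_enum.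
have bpos : 0 < foldr Num.min (D h) (map D t).
  have := hin; rewrite -(map_cons D) -E => /mapP[i]; rewrite mem_enum => Ui ->.
  rewrite hD subr_gt0; exact: strict_comp Hp Hd Ui.
rewrite ler_pdivlMr //.
apply: (le_trans (ler_wpM2r (ltW bpos) (@sqrt_sum_le R _ (Ubar xs) (fun i => x i 0) (fun i _ => x0 i)))).
rewrite mulr_suml; apply: le_trans hmain; apply: ler_sum => i Ui.
rewrite [D i * _]mulrC; apply: ler_wpM2l => //; exact: hle (Dmem i Ui).
Qed.
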